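(* For every $n\ge-1$, the polygraph freely generating $\mathcal O_n$ is atomic: for every $m$-generator $x$ of it and every $0\le i<m$, the supports of $[s_i(x)]$ and $[t_i(x)]$ in $\lambda(\mathcal O_n)_i$ are disjoint.
   Context: All $\omega$-categories are strict and globular; $s_i(x),t_i(x)$ are iterated $i$-sources/targets. A polygraph $S$ consists of sets $S_n$ of $n$-generators with source/target maps from $S_{n+1}$ to $n$-cells of the free $n$-category on $S_0,\dots,S_n$; $S^*$ is the free $\omega$-category. An expansion on an $\omega$-category $C$ consists of a $0$-cell $o$ and, for each $k$-cell $x$, a $(k+1)$-cell $\xi_x$ with $\xi_x:o\to x$ if $k=0$ and $\xi_x:\xi_{t(x)}\to x\star_0\xi_{s_0(x)}\star_1\cdots\star_{k-1}\xi_{s_{k-1}(x)}$ if $k>0$ (composites bracketed giving priority to lowest-dimensional composition), satisfying $\xi_{y\star_p x}=t_{p+1}(y)\star_0\xi_{s_0(x)}\star_1\cdots\star_{p-1}\xi_{s_{p-1}(x)}\star_p\xi_x\star_{p+1}\xi_y$, $\xi_{1_u}=1_{\xi_u}$, $\xi_{\xi_u}=1_{\xi_u}$, $\xi_o=1_o$. $T=UF$ is the monad induced by the forgetful functor $U$ from $\omega$-categories with expansion to $\omega\mathbf{Cat}$ and its left adjoint $F$, with unit $\eta$. For a polygraph $S$, $T(S^* )$ is freely generated by the polygraph whose $n$-generators are $\eta(a)$ ($a\in S_n$), together with the origin $o$ if $n=0$ and $\xi_{\eta(a)}$ ($a\in S_{n-1}$) if $n\ge1$. $\mathcal O_n=T^{n+1}(\emptyset)$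 ($\mathcal O_{-1}=\emptyset$), and its generating polygraph is obtained by iterating this construction $n+1$ times from the empty polygraph. For a polygraph $S$, $\lambda(S^* )_k$ is the free abelian group on $k$-cells of $S^*$ modulo $x\star_j y-x-y$; it is free abelian on the classes $[x]$ of $k$-generators; the support of an element is the set of generators with nonzero coefficient. A polygraph is atomic if for every $m$-generator $x$ and $0\le i<m$, the supports of $[s_i(x)]$ and $[t_i(x)]$ are disjoint. *)

(* Defs.v *)
From Stdlib Require Import ZArith List Arith.

(* Formal cells of the free omega-category on a polygraph with generators G.
   [Comp p x y] denotes x *_p y (paper convention: x *_p y is defined when
   s_p(x) = t_p(y), i.e. "y then x").  Lower-dimensional operands of a
   composite are implicitly identities (standard whiskering convention). *)
Inductive cell (G : Type) : Type :=
| Gen : G -> cell G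
| Idc : cell G -> cell G
| Comp : nat -> cell G -> cell G -> cell G.
Arguments Gen {G} _.
Arguments Idc {G} _.
Arguments Comp {G} _ _ _.

Fixpoint cmap {A B : Type} (f : A -> B) (c : cell A) : cell B :=
  match c with
  | Gen a => Gen (f a)
  | Idc u => Idc (cmap f u)
  | Comp p x y => Comp p (cmap f x) (cmap f y)
  end.

(* A polygraph: generators, their dimension, and source ([gface false]) /
   target ([gface true]) of each generator of dimension >= 1, as a cell of
   the free category on lower generators.  Generator sets carry decidable
   equality (needed to read off coefficients). *)
Record polygraph : Type := {
  gen : Type;
  gen_eq_dec : forall x y : gen, {x = y} + {x <> y};
  gdim : gen -> nat;
  gface : bool -> gen -> cell gen
}.

Section Cells.
Context {G : Type} (gd : G -> nat) (fc : bool -> G -> cell G).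

Fixpoint cdim (c : cell G) : nat :=
  match c with
  | Gen g => gd g
  | Idc u => S (cdim u)
  | Comp _ x y => Nat.max (cdim x) (cdim y)
  end.

(* (n-1)-dimensional source (b = false) / target (b = true) of c regarded
   as an n-cell (c itself if c has lower dimension, i.e. is an identity). *)
Fixpoint face (b : bool) (n : nat) (c : cell G) : cell G :=
  if cdim c <? n then c else
  match c with
  | Gen g => fc b g
  | Idc u => u
  | Comp j x y =>
      if j + 1 =? n then (if b then face b n x else face b n y)
      else Comp j (face b n x) (face b n y)
  end.

Fixpoint bndk (b : bool) (k n : nat) (c : cell G) : cell G :=
  match k with
  | 0 => c
  | S k' => bndk b k' (n - 1) (face b n c)
  end.

Definition bnd (b : bool) (i : nat) (c : cell G) : cell G :=
  bndk b (cdim c - i) (cdim c) c.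

Context (eqd : forall x y : G, {x = y} + {x <> y}).

(* coefficient of the generator g in the class [c] in lambda(S^* )_k
   (free abelian group on k-generators, x *_j y = x + y, identities = 0) *)
Fixpoint coeff (k : nat) (c : cell G) (g : G) : Z :=
  match c with
  | Gen h => if Nat.eqb (gd h) k then (if eqd h g then 1%Z else 0%Z) else 0%Z
  | Idc _ => 0%Z
  | Comp _ x y => (coeff k x g + coeff k y g)%Z
  end.

End Cells.

(* generators of the polygraph generating T(S^* ):
   Orig = o, Eta a = eta(a), Xi a = xi_{eta(a)} *)
Inductive tgen (G : Type) : Type :=
| Orig : tgen G
| Eta : G -> tgen G
| Xi : G -> tgen G.
Arguments Orig {G}.
Arguments Eta {G} _.
Arguments Xi {G} _.

Definition tgen_eq_dec {G : Type} (eqd : forall x y : G, {x = y} + {x <> y})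
  (x y : tgen G) : {x = y} + {x <> y}.
Proof. decide equality. Defined.

(* fold: ((acc *_0 f 0) *_1 f 1) ... *_(k-1) f (k-1)  (priority to lowest
   dimensional composition) *)
Definition chain {A : Type} (acc : cell A) (f : nat -> cell A) (k : nat) : cell A :=
  fold_left (fun a j => Comp j a (f j)) (seq 0 k) acc.

Section Expansion.
Context {G : Type} (gd : G -> nat) (fc : bool -> G -> cell G).

(* xi_{eta(c)} computed from the expansion axioms:
   xi_{eta a} = Xi a (generator), xi_{1_u} = 1_{xi_u},
   xi_{y *_p x} = t_{p+1}(y) *_0 xi_{s_0 x} *_1 ... *_{p-1} xi_{s_{p-1} x}
                  *_p xi_x *_{p+1} xi_y. *)
Fixpoint xi_fuel (n : nat) (c : cell G) : cell (tgen G) :=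
  match n with
  | 0 => Gen Orig
  | S n' =>
      (fix go (c : cell G) : cell (tgen G) :=
         match c with
         | Gen a => Gen (Xi a)
         | Idc u => Idc (go u)
         | Comp p y x =>
             Comp (S p)
               (Comp p
                  (chain (cmap Eta (bnd gd fc true (S p) y))
                         (fun j => xi_fuel n' (bnd gd fc false j x)) p)
                  (go x))
               (go y)
         end) c
  end.

Definition xiS (c : cell G) : cell (tgen G) := xi_fuel (S (cdim gd c)) c.

Definition Tdim (a : tgen G) : nat :=
  match a with
  | Orig => 0
  | Eta a => gd a
  | Xi a => S (gd a)
  end.

Definition Tface (b : bool) (a : tgen G) : cell (tgen G) :=
  match a with
  | Orig => Gen Orig (* a 0-generator: irrelevant *)
  | Eta a => cmap Eta (fc b a)
  | Xi a =>
      if b then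
        chain (Gen (Eta a)) (fun j => xiS (bnd gd fc false j (Gen a))) (gd a)
      else
        match gd a with
        | 0 => Gen Orig                 (* xi_{eta a} : o -> eta a *)
        | S _ => xiS (fc true a)
        end
  end.

End Expansion.

Definition Tpoly (P : polygraph) : polygraph :=
  {| gen := tgen (gen P);
     gen_eq_dec := tgen_eq_dec (gen_eq_dec P);
     gdim := Tdim (gdim P);
     gface := Tface (gdim P) (gface P) |}.

Definition empty_polygraph : polygraph :=
  {| gen := Empty_set;
     gen_eq_dec := fun x _ => match x with end;
     gdim := fun x => match x with end;
     gface := fun _ x => match x with end |}.

Definition O_polygraph (n : Z) : polygraph :=
  Nat.iter (Z.to_nat (n + 1)) Tpoly empty_polygraph.

Definition in_support (P : polygraph) (k : nat) (c : cell (gen P)) (g : gen P) : Prop :=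
  coeff (gdim P) (gen_eq_dec P) k c g <> 0%Z.

Definition src_i (P : polygraph) (i : nat) (c : cell (gen P)) : cell (gen P) :=
  bnd (gdim P) (gface P) false i c.
Definition tgt_i (P : polygraph) (i : nat) (c : cell (gen P)) : cell (gen P) :=
  bnd (gdim P) (gface P) true i c.

Definition atomic (P : polygraph) : Prop :=
  forall (x : gen P) (i : nat), i < gdim P x ->
  forall g : gen P,
    ~ (in_support P i (src_i P i (Gen x)) g /\ in_support P i (tgt_i P i (Gen x)) g).

(* Main.v *)
Require Import Defs.
From Stdlib Require Import ZArith Lia List Arith Bool.
Open Scope bool_scope.
Open Scope nat_scope.

Section Generic.
Context {G : Type} (gd : G -> nat) (fc : bool -> G -> cell G).

Fixpoint WFc (c : cell G) : Prop :=
  match c with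
  | Gen _ => True
  | Idc _ => False
  | Comp j x y => WFc x /\ WFc y /\ S j <= cdim gd x /\ S j <= cdim gd y
  end.

Definition WFg := forall b g, 1 <= gd g -> WFc (fc b g) /\ cdim gd (fc b g) = gd g - 1.

Lemma face_eq b n c : face gd fc b n c =
  if cdim gd c <? n then c else
  match c with
  | Gen g => fc b g
  | Idc u => u
  | Comp j x y =>
      if j + 1 =? n then (if b then face gd fc b n x else face gd fc b n y)
      else Comp j (face gd fc b n x) (face gd fc b n y)
  end.
Proof. destruct c; reflexivity. Qed.

Lemma face_lt b n c : cdim gd c < n -> face gd fc b n c = c.
Proof. intro H. rewrite face_eq. apply Nat.ltb_lt in H. rewrite H. reflexivity. Qed.

Lemma face_Comp b n j x y : face gd fc b n (Comp j x y) =
  if (j + 1 =? n) && (n <=? cdim gd (Comp j x y)) then (if b then face gd fc b n x else face gd fc b n y)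
  else Comp j (face gd fc b n x) (face gd fc b n y).
Proof.
  rewrite face_eq. destruct (cdim gd (Comp j x y) <? n) eqn:E.
  - apply Nat.ltb_lt in E. simpl in E.
    rewrite (face_lt b n x) by lia. rewrite (face_lt b n y) by lia.
    assert (n <=? cdim gd (Comp j x y) = false) as ->. { apply Nat.leb_gt. simpl. lia. }
    rewrite Bool.andb_false_r. reflexivity.
  - apply Nat.ltb_ge in E. assert (n <=? cdim gd (Comp j x y) = true) as -> by (apply Nat.leb_le; lia).
    rewrite Bool.andb_true_r. reflexivity.
Qed.

Hypothesis HW : WFg.

Lemma face_spec b c : WFc c -> forall n, 1 <= n -> cdim gd c <= n ->
  WFc (face gd fc b n c) /\ cdim gd (face gd fc b n c) = Nat.min (cdim gd c) (n - 1).
Proof.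
  induction c as [g|u IH|j x IHx y IHy]; intros Hc n Hn Hd.
  - simpl in Hd. destruct (Nat.eq_dec (gd g) n) as [<-|Hne].
    + rewrite face_eq. simpl. rewrite Nat.ltb_irrefl. destruct (HW b g Hn) as [A B].
      split; [exact A|]. rewrite B. simpl. lia.
    + rewrite face_lt by (simpl; lia). simpl. split; [exact I|lia].
  - destruct Hc.
  - destruct Hc as (Wx & Wy & Dx & Dy). simpl in Hd.
    rewrite face_Comp. simpl cdim.
    destruct (j + 1 =? n) eqn:E1.
    + apply Nat.eqb_eq in E1.
      assert (n <=? Nat.max (cdim gd x) (cdim gd y) = true) as -> by (apply Nat.leb_le; lia).
      simpl. destruct b.
      * destruct (IHx Wx n Hn ltac:(lia)) as [A B]. split; [exact A|]. rewrite B. lia.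
      * destruct (IHy Wy n Hn ltac:(lia)) as [A B]. split; [exact A|]. rewrite B. lia.
    + apply Nat.eqb_neq in E1. simpl.
      destruct (IHx Wx n Hn ltac:(lia)) as [A B]. destruct (IHy Wy n Hn ltac:(lia)) as [C D].
      simpl. rewrite B, D. repeat split; try assumption; lia.
Qed.

Lemma bndk_S b k n c : bndk gd fc b (S k) n c = bndk gd fc b k (n - 1) (face gd fc b n c).
Proof. reflexivity. Qed.

Lemma bndk_spec b k : forall N c, WFc c -> cdim gd c <= N -> k <= N ->
  WFc (bndk gd fc b k N c) /\ cdim gd (bndk gd fc b k N c) = Nat.min (cdim gd c) (N - k).
Proof.
  induction k as [|k IH]; intros N c Wc Hd Hk.
  - simpl. split; [exact Wc|lia].
  - rewrite bndk_S. destruct (face_spec b c Wc N ltac:(lia) Hd) as [A B].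
    destruct (IH (N - 1) _ A ltac:(lia) ltac:(lia)) as [C D]. split; [exact C|]. rewrite D, B. lia.
Qed.

Lemma bnd_spec b i c : WFc c -> WFc (bnd gd fc b i c) /\ cdim gd (bnd gd fc b i c) = Nat.min (cdim gd c) i.
Proof.
  intro Wc. unfold bnd. destruct (bndk_spec b (cdim gd c - i) (cdim gd c) c Wc (le_n _) ltac:(lia)) as [A B].
  split; [exact A|]. rewrite B. lia.
Qed.

Lemma bnd_ge b i c : cdim gd c <= i -> bnd gd fc b i c = c.
Proof. intro H. unfold bnd. replace (cdim gd c - i) with 0 by lia. reflexivity. Qed.

Lemma bnd_face b i c N : WFc c -> cdim gd c = N -> i < N ->
  bnd gd fc b i c = bnd gd fc b i (face gd fc b N c).
Proof.
  intros Wc Hd Hi. destruct (face_spec b c Wc N ltac:(lia) ltac:(lia)) as [A B].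
  unfold bnd at 1. rewrite Hd. replace (N - i) with (S (N - 1 - i)) by lia. rewrite bndk_S.
  unfold bnd. rewrite B, Hd. replace (Nat.min N (N - 1)) with (N - 1) by lia. reflexivity.
Qed.

Lemma bndk_bnd b k : forall N c, WFc c -> cdim gd c <= N -> k <= N ->
  bndk gd fc b k N c = bnd gd fc b (N - k) c.
Proof.
  induction k as [|k IH]; intros N c Wc Hd Hk.
  - simpl. rewrite bnd_ge by lia. reflexivity.
  - rewrite bndk_S. destruct (Nat.eq_dec (cdim gd c) N) as [E|E].
    + destruct (face_spec b c Wc N ltac:(lia) ltac:(lia)) as [A B].
      rewrite IH by (try assumption; lia). rewrite (bnd_face b (N - S k) c N) by (assumption || lia).
      f_equal. lia.
    + rewrite face_lt by lia. rewrite IH by (try assumption; lia). f_equal. lia.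
Qed.

Lemma bndk_add b k1 : forall k2 N c, bndk gd fc b (k1 + k2) N c = bndk gd fc b k2 (N - k1) (bndk gd fc b k1 N c).
Proof.
  induction k1 as [|k1 IH]; intros k2 N c.
  - simpl. rewrite Nat.sub_0_r. reflexivity.
  - simpl (S k1 + k2). rewrite !bndk_S. rewrite IH. f_equal. lia.
Qed.

Lemma bnd_bnd b i m c : WFc c -> i <= m -> bnd gd fc b i (bnd gd fc b m c) = bnd gd fc b i c.
Proof.
  intros Wc Him. destruct (le_lt_dec (cdim gd c) m) as [H|H].
  - rewrite (bnd_ge b m c H). reflexivity.
  - destruct (bnd_spec b m c Wc) as [A B].
    unfold bnd at 3. replace (cdim gd c - i) with ((cdim gd c - m) + (m - i)) by lia.
    rewrite bndk_add. replace (cdim gd c - (cdim gd c - m)) with m by lia.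
    fold (bnd gd fc b m c). rewrite bndk_bnd by (try assumption; lia). f_equal. lia.
Qed.

Lemma bnd_Comp b i j : forall D x y, cdim gd (Comp j x y) = D -> WFc x -> WFc y ->
  S j <= cdim gd x -> S j <= cdim gd y ->
  bnd gd fc b i (Comp j x y) =
  if j <? i then Comp j (bnd gd fc b i x) (bnd gd fc b i y)
  else bnd gd fc b i (if b then x else y).
Proof.
  induction D as [|D IH]; intros x y HD Wx Wy Dx Dy; simpl in HD.
  - lia.
  - destruct (le_lt_dec (S D) i) as [Hi|Hi].
    + rewrite bnd_ge by (simpl; lia). rewrite (bnd_ge b i x) by lia. rewrite (bnd_ge b i y) by lia.
      assert (j <? i = true) as -> by (apply Nat.ltb_lt; lia). reflexivity.
    + assert (WC : WFc (Comp j x y)) by (simpl; auto).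
      rewrite (bnd_face b i _ (S D) WC) by (simpl; lia).
      rewrite face_Comp. simpl cdim.
      destruct (j + 1 =? S D) eqn:E1.
      * apply Nat.eqb_eq in E1.
        assert (S D <=? Nat.max (cdim gd x) (cdim gd y) = true) as -> by (apply Nat.leb_le; lia).
        assert (j <? i = false) as -> by (apply Nat.ltb_ge; lia). simpl.
        destruct b; symmetry; apply bnd_face; auto; lia.
      * apply Nat.eqb_neq in E1. simpl.
        destruct (face_spec b x Wx (S D) ltac:(lia) ltac:(lia)) as [A B].
        destruct (face_spec b y Wy (S D) ltac:(lia) ltac:(lia)) as [C E].
        rewrite (IH _ _ ltac:(simpl; rewrite B, E; lia) A C ltac:(lia) ltac:(lia)).
        assert (Fx : bnd gd fc b i (face gd fc b (S D) x) = bnd gd fc b i x).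
        { destruct (Nat.eq_dec (cdim gd x) (S D)). symmetry; apply bnd_face; auto; lia.
          rewrite face_lt by lia. reflexivity. }
        assert (Fy : bnd gd fc b i (face gd fc b (S D) y) = bnd gd fc b i y).
        { destruct (Nat.eq_dec (cdim gd y) (S D)). symmetry; apply bnd_face; auto; lia.
          rewrite face_lt by lia. reflexivity. }
        destruct b; rewrite ?Fx, ?Fy; reflexivity.
Qed.

Lemma bnd_Gen b i g : i < gd g -> bnd gd fc b i (Gen g) = bnd gd fc b i (fc b g).
Proof.
  intro H. rewrite (bnd_face b i (Gen g) (gd g)) by (simpl; auto). rewrite face_eq. simpl.
  rewrite Nat.ltb_irrefl. reflexivity.
Qed.

Lemma chain_S {A} (acc : cell A) f k : chain acc f (S k) = Comp k (chain acc f k) (f k).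
Proof. unfold chain. rewrite seq_S, fold_left_app. reflexivity. Qed.

Lemma chain_spec acc f k : WFc acc -> k <= cdim gd acc ->
  (forall j, j < k -> WFc (f j) /\ cdim gd (f j) = S j) ->
  WFc (chain acc f k) /\ cdim gd (chain acc f k) = cdim gd acc.
Proof.
  intros Wa Hk Hf. induction k as [|k IH].
  - split; [exact Wa|reflexivity].
  - rewrite chain_S. destruct IH as [A B]; try lia. intros; apply Hf; lia.
    destruct (Hf k ltac:(lia)) as [C D]. simpl. rewrite B, D. repeat split; auto; lia.
Qed.

Context (eqd : forall x y : G, {x = y} + {x <> y}).

Lemma coeff_gt k c g : cdim gd c < k -> coeff gd eqd k c g = 0%Z.
Proof.
  induction c; simpl; intro H.
  - assert (gd g0 =? k = false) as -> by (apply Nat.eqb_neq; lia). reflexivity.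
  - reflexivity.
  - rewrite IHc1, IHc2 by lia. reflexivity.
Qed.

Lemma coeff_nonneg k c g : (0 <= coeff gd eqd k c g)%Z.
Proof.
  induction c; simpl; try lia. destruct (gd g0 =? k); [destruct (eqd g0 g)|]; lia.
Qed.

Lemma chain_coeff i acc f k : WFc acc -> k <= cdim gd acc ->
  (forall j, j < k -> WFc (f j) /\ cdim gd (f j) = S j) -> forall g,
  coeff gd eqd i (bnd gd fc true i (chain acc f k)) g =
  (coeff gd eqd i (bnd gd fc true i acc) g +
   match i with O => 0%Z | S i' => if Nat.ltb i' k then coeff gd eqd i (f i') g else 0%Z end)%Z.
Proof.
  intros Wa Hk Hf g. induction k as [|k IH].
  - change (chain acc f 0) with acc. destruct i as [|i']; [lia|]. replace (Nat.ltb i' 0) with false by (symmetry; apply Nat.ltb_ge; lia). lia.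
  - destruct (chain_spec acc f k Wa ltac:(lia) ltac:(intros; apply Hf; lia)) as [A B].
    destruct (Hf k ltac:(lia)) as [C D].
    rewrite chain_S. rewrite (bnd_Comp true i k _ _ _ eq_refl A C ltac:(lia) ltac:(lia)).
    destruct (k <? i) eqn:E.
    + apply Nat.ltb_lt in E. simpl coeff. rewrite IH by (lia || (intros; apply Hf; lia)).
      rewrite (bnd_ge true i (f k)) by lia.
      destruct i as [|i']; [lia|].
      destruct (Nat.eq_dec i' k) as [->|Hne].
      * rewrite Nat.ltb_irrefl. assert (k <? S k = true) as -> by (apply Nat.ltb_lt; lia). lia.
      * assert (i' <? k = false) as -> by (apply Nat.ltb_ge; lia).
        assert (i' <? S k = false) as -> by (apply Nat.ltb_ge; lia).
        rewrite (coeff_gt (S i') (f k)) by lia. lia.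
    + apply Nat.ltb_ge in E. rewrite IH by (lia || (intros; apply Hf; lia)).
      destruct i as [|i']; [lia|].
      assert (i' <? k = true) as -> by (apply Nat.ltb_lt; lia).
      assert (i' <? S k = true) as -> by (apply Nat.ltb_lt; lia). lia.
Qed.

End Generic.

Section Lift.
Context {G : Type} (gd : G -> nat) (fc : bool -> G -> cell G)
  (eqd : forall x y : G, {x = y} + {x <> y}).
Hypothesis HW : WFg gd fc.

Notation qd := (Tdim gd).
Notation qf := (Tface gd fc).
Notation qeq := (tgen_eq_dec eqd).
Notation xf := (xi_fuel gd fc).

Lemma cdim_cmap c : cdim qd (cmap Eta c) = cdim gd c.
Proof. induction c; simpl; auto. Qed.

Lemma WF_cmap c : WFc qd (cmap Eta c) <-> WFc gd c.
Proof. induction c; simpl; try tauto. rewrite !cdim_cmap. tauto. Qed.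

Lemma face_cmap b n c : face qd qf b n (cmap Eta c) = cmap Eta (face gd fc b n c).
Proof.
  induction c as [g|u IH|j x IHx y IHy];
  rewrite (face_eq qd qf b n (cmap Eta _)), (face_eq gd fc b n); rewrite cdim_cmap;
  destruct (cdim gd _ <? n); try reflexivity.
  simpl. rewrite IHx, IHy. destruct (j + 1 =? n), b; reflexivity.
Qed.

Lemma bndk_cmap b k : forall n c, bndk qd qf b k n (cmap Eta c) = cmap Eta (bndk gd fc b k n c).
Proof. induction k; intros; simpl; [reflexivity|]. rewrite face_cmap. apply IHk. Qed.

Lemma bnd_cmap b i c : bnd qd qf b i (cmap Eta c) = cmap Eta (bnd gd fc b i c).
Proof. unfold bnd. rewrite cdim_cmap. apply bndk_cmap. Qed.

Lemma coeff_cmap k c g' : coeff qd qeq k (cmap Eta c) g' =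
  match g' with Eta h => coeff gd eqd k c h | _ => 0%Z end.
Proof.
  induction c; cbn [coeff cmap Tdim].
  - destruct (gd g =? k); [|destruct g'; reflexivity].
    destruct (qeq (Eta g) g') as [e|e]; destruct g' as [|h|h]; try congruence;
      destruct (eqd g h); congruence.
  - destruct g'; reflexivity.
  - rewrite IHc1, IHc2. destruct g'; reflexivity.
Qed.

Lemma xi_fuel_Comp n p y x : xf (S n) (Comp p y x) =
  Comp (S p) (Comp p (chain (cmap Eta (bnd gd fc true (S p) y))
                          (fun j => xf n (bnd gd fc false j x)) p) (xf (S n) x)) (xf (S n) y).
Proof. reflexivity. Qed.

Definition xiok n := forall v, WFc gd v -> cdim gd v < n ->
  WFc qd (xf n v) /\ cdim qd (xf n v) = S (cdim gd v).

Lemma f_spec n p x : xiok n -> WFc gd x -> p <= n -> p <= cdim gd x -> forall j, j < p ->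
  WFc qd (xf n (bnd gd fc false j x)) /\ cdim qd (xf n (bnd gd fc false j x)) = S j.
Proof.
  intros Hn Wx Hp Hx j Hj. destruct (bnd_spec gd fc HW false j x Wx) as [A B].
  destruct (Hn _ A ltac:(lia)) as [C D]. split; [exact C|]. rewrite D, B. lia.
Qed.

Lemma C_spec n p y x : xiok n -> WFc gd y -> WFc gd x -> p <= n -> S p <= cdim gd y -> p <= cdim gd x ->
  WFc qd (chain (cmap Eta (bnd gd fc true (S p) y)) (fun j => xf n (bnd gd fc false j x)) p) /\
  cdim qd (chain (cmap Eta (bnd gd fc true (S p) y)) (fun j => xf n (bnd gd fc false j x)) p) = S p.
Proof.
  intros Hn Wy Wx Hp Hy Hx.
  destruct (bnd_spec gd fc HW true (S p) y Wy) as [A B].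
  destruct (chain_spec qd (cmap Eta (bnd gd fc true (S p) y)) (fun j => xf n (bnd gd fc false j x)) p)
    as [C D].
  - apply WF_cmap; exact A.
  - rewrite cdim_cmap, B. lia.
  - apply (f_spec n p x Hn Wx Hp Hx).
  - split; [exact C|]. rewrite D, cdim_cmap, B. lia.
Qed.

Lemma xi_WF n : xiok n.
Proof.
  induction n as [|n IHn]; intros v Wv Hv; [lia|].
  induction v as [g|u _|p y IHy x IHx].
  - simpl. split; [exact I|reflexivity].
  - destruct Wv.
  - destruct Wv as (Wy & Wx & Dy & Dx). simpl in Hv.
    rewrite xi_fuel_Comp.
    destruct (C_spec n p y x IHn Wy Wx ltac:(lia) Dy ltac:(lia)) as [A B].
    destruct (IHx Wx ltac:(lia)) as [C D]. destruct (IHy Wy ltac:(lia)) as [E F].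
    cbn [WFc cdim]. rewrite B, D, F. repeat split; auto; lia.
Qed.

Lemma xiS_spec v : WFc gd v -> WFc qd (xiS gd fc v) /\ cdim qd (xiS gd fc v) = S (cdim gd v).
Proof. intro Wv. apply xi_WF; auto. Qed.

Lemma T_WF : WFg qd qf.
Proof.
  intros b g' Hg. destruct g' as [|a|a]; simpl in Hg.
  - lia.
  - change (qf b (Eta a)) with (cmap Eta (fc b a)). destruct (HW b a Hg) as [A B].
    split; [apply WF_cmap; exact A|]. rewrite cdim_cmap, B. reflexivity.
  - destruct b.
    + change (qf true (Xi a)) with
        (chain (Gen (Eta a)) (fun j => xiS gd fc (bnd gd fc false j (Gen a))) (gd a)).
      destruct (chain_spec qd (Gen (Eta a)) (fun j => xiS gd fc (bnd gd fc false j (Gen a))) (gd a))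
        as [A B].
      * exact I.
      * simpl. lia.
      * intros j Hj. destruct (bnd_spec gd fc HW false j (Gen a) I) as [C D].
        destruct (xiS_spec _ C) as [E F]. split; [exact E|]. rewrite F, D. simpl. lia.
      * split; [exact A|]. rewrite B. simpl. lia.
    + change (qf false (Xi a)) with
        (match gd a with 0 => Gen Orig | S _ => xiS gd fc (fc true a) end).
      simpl. destruct (gd a) as [|k] eqn:E.
      * split; [exact I|reflexivity].
      * destruct (HW true a ltac:(lia)) as [A B]. destruct (xiS_spec _ A) as [C D].
        split; [exact C|]. rewrite D, B, E. lia.
Qed.

Lemma xi_top n : forall u, WFc gd u -> cdim gd u < n -> forall k, cdim gd u <= k -> forall g',
  coeff qd qeq (S k) (xf n u) g' = match g' with Xi h => coeff gd eqd k u h | _ => 0%Z end.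
Proof.
  destruct n as [|n]; intros u Wu Hu; [lia|].
  induction u as [g|u _|p y IHy x IHx]; intros k Hk g'.
  - cbn [xi_fuel coeff Tdim]. cbn [cdim] in Hk.
    change (S (gd g) =? S k) with (gd g =? k).
    destruct (gd g =? k); [|destruct g'; reflexivity].
    destruct (qeq (Xi g) g') as [e|e]; destruct g' as [|h|h]; try congruence;
      destruct (eqd g h); congruence.
  - destruct Wu.
  - destruct Wu as (Wy & Wx & Dy & Dx). cbn [cdim] in Hu, Hk.
    rewrite xi_fuel_Comp. cbn [coeff].
    destruct (C_spec n p y x (xi_WF n) Wy Wx ltac:(lia) Dy ltac:(lia)) as [A B].
    rewrite (coeff_gt qd qeq) by lia.
    rewrite IHx, IHy by (auto; lia).
    destruct g'; cbn [coeff]; lia.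
Qed.

Lemma xi_src D : forall n u, cdim gd u < D -> WFc gd u -> cdim gd u < n -> forall i g',
  coeff qd qeq i (bnd qd qf false i (xf n u)) g' =
  match i with O => match g' with Orig => 1%Z | _ => 0%Z end
  | S i' => match g' with Xi h => coeff gd eqd i' (bnd gd fc true i' u) h | _ => 0%Z end end.
Proof.
  induction D as [|D IHD]; intros n u HD Wu Hn; [lia|].
  destruct n as [|n]; [lia|].
  induction u as [a|u _|p y IHy x IHx]; intros i g'.
  - change (xf (S n) (Gen a)) with (Gen (Xi a) : cell (tgen G)). cbn [cdim] in *.
    destruct (le_lt_dec (S (gd a)) i) as [Hi|Hi].
    + rewrite bnd_ge by (cbn; lia).
      destruct i as [|i']; [lia|].
      rewrite (bnd_ge gd fc true i' (Gen a)) by (cbn; lia).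
      cbn [coeff Tdim]. change (S (gd a) =? S i') with (gd a =? i').
      destruct (gd a =? i'); [|destruct g'; reflexivity].
      destruct (qeq (Xi a) g') as [e|e]; destruct g' as [|h|h]; try congruence; destruct (eqd a h); congruence.
    + rewrite (bnd_Gen qd qf T_WF false i (Xi a)) by (cbn; lia).
      change (qf false (Xi a)) with (match gd a with 0 => Gen Orig | S _ => xiS gd fc (fc true a) end).
      destruct (gd a) as [|k] eqn:E.
      * assert (i = 0) as -> by lia. rewrite bnd_ge by (cbn; lia). cbn [coeff Tdim Nat.eqb].
        destruct (qeq Orig g') as [e|e]; destruct g'; congruence.
      * destruct (HW true a ltac:(lia)) as [A B]. rewrite E in B.
        unfold xiS. rewrite (IHD (S (cdim gd (fc true a))) (fc true a) ltac:(lia) A ltac:(lia)).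
        destruct i as [|i']; [reflexivity|].
        rewrite (bnd_Gen gd fc HW true i' a) by lia. reflexivity.
  - destruct Wu.
  - destruct Wu as (Wy & Wx & Dy & Dx). cbn [cdim] in HD, Hn.
    rewrite xi_fuel_Comp.
    destruct (C_spec n p y x (xi_WF n) Wy Wx ltac:(lia) Dy ltac:(lia)) as [A B].
    destruct (xi_WF (S n) x Wx ltac:(lia)) as [C Dc]. destruct (xi_WF (S n) y Wy ltac:(lia)) as [E F].
    rewrite (bnd_Comp qd qf T_WF false i (S p) _ _ _ eq_refl)
      by (cbn [WFc cdim]; rewrite ?B, ?Dc, ?F; repeat split; auto; lia).
    destruct (S p <? i) eqn:Ei.
    + apply Nat.ltb_lt in Ei.
      rewrite (bnd_Comp qd qf T_WF false i p _ _ _ eq_refl) by (rewrite ?B, ?Dc; auto; lia).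
      assert (p <? i = true) as -> by (apply Nat.ltb_lt; lia).
      cbn [coeff]. rewrite (bnd_ge qd qf false i (chain _ _ _)) by lia.
      rewrite (coeff_gt qd qeq i (chain _ _ _)) by lia.
      rewrite IHx, IHy by (auto; lia).
      destruct i as [|i']; [lia|].
      rewrite (bnd_Comp gd fc HW true i' p _ _ _ eq_refl) by auto.
      assert (p <? i' = true) as -> by (apply Nat.ltb_lt; lia).
      destruct g'; cbn [coeff]; lia.
    + apply Nat.ltb_ge in Ei. cbv beta iota. rewrite IHy by (auto; lia).
      destruct i as [|i']; [reflexivity|].
      rewrite (bnd_Comp gd fc HW true i' p _ _ _ eq_refl) by auto.
      assert (p <? i' = false) as -> by (apply Nat.ltb_ge; lia). reflexivity.
Qed.

Lemma fXi_spec a : forall j, j < gd a ->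
  WFc qd (xiS gd fc (bnd gd fc false j (Gen a))) /\ cdim qd (xiS gd fc (bnd gd fc false j (Gen a))) = S j.
Proof.
  intros j Hj. destruct (bnd_spec gd fc HW false j (Gen a) I) as [C D].
  destruct (xiS_spec _ C) as [E F]. split; [exact E|]. rewrite F, D. simpl. lia.
Qed.

Lemma xi_tgt n : forall u, WFc gd u -> cdim gd u < n -> forall i g',
  coeff qd qeq i (bnd qd qf true i (xf n u)) g' =
  match g' with Orig => 0%Z | Eta h => coeff gd eqd i (bnd gd fc true i u) h
  | Xi h => match i with O => 0%Z | S i' => coeff gd eqd i' (bnd gd fc false i' u) h end end.
Proof.
  destruct n as [|n]; intros u Wu Hn; [lia|].
  induction u as [a|u _|p y IHy x IHx]; intros i g'.
  - change (xf (S n) (Gen a)) with (Gen (Xi a) : cell (tgen G)). cbn [cdim] in *.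
    destruct (le_lt_dec (S (gd a)) i) as [Hi|Hi].
    + rewrite bnd_ge by (cbn; lia). rewrite (bnd_ge gd fc true i (Gen a)) by (cbn; lia).
      destruct i as [|i']; [lia|]. rewrite (bnd_ge gd fc false i' (Gen a)) by (cbn; lia).
      cbn [coeff Tdim]. change (S (gd a) =? S i') with (gd a =? i').
      assert (gd a =? S i' = false) as -> by (apply Nat.eqb_neq; lia).
      destruct (gd a =? i'); [|destruct g'; reflexivity].
      destruct (qeq (Xi a) g') as [e|e]; destruct g' as [|h|h]; try congruence; destruct (eqd a h); congruence.
    + rewrite (bnd_Gen qd qf T_WF true i (Xi a)) by (cbn; lia).
      change (qf true (Xi a)) with
        (chain (cmap Eta (Gen a)) (fun j => xiS gd fc (bnd gd fc false j (Gen a))) (gd a)).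
      rewrite (chain_coeff qd qf T_WF qeq i) by (exact I || (cbn; lia) || apply fXi_spec).
      rewrite bnd_cmap, coeff_cmap.
      destruct i as [|i'].
      * destruct g'; cbn [coeff]; lia.
      * assert (i' <? gd a = true) as -> by (apply Nat.ltb_lt; lia).
        destruct (bnd_spec gd fc HW false i' (Gen a) I) as [C D].
        unfold xiS. rewrite xi_top by (auto; cbn [cdim] in D; lia).
        destruct g'; cbn [coeff]; lia.
  - destruct Wu.
  - destruct Wu as (Wy & Wx & Dy & Dx). cbn [cdim] in Hn.
    rewrite xi_fuel_Comp.
    destruct (C_spec n p y x (xi_WF n) Wy Wx ltac:(lia) Dy ltac:(lia)) as [A B].
    destruct (xi_WF (S n) x Wx ltac:(lia)) as [C Dc]. destruct (xi_WF (S n) y Wy ltac:(lia)) as [E F].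
    destruct (bnd_spec gd fc HW true (S p) y Wy) as [Ay By].
    assert (Hch : forall ii, ii <= S p -> forall gg,
      coeff qd qeq ii (bnd qd qf true ii (chain (cmap Eta (bnd gd fc true (S p) y))
                          (fun j => xf n (bnd gd fc false j x)) p)) gg =
      (match gg with Eta h => coeff gd eqd ii (bnd gd fc true ii y) h | _ => 0%Z end +
       match ii with O => 0%Z | S ii_ => if Nat.ltb ii_ p then
          match gg with Xi h => coeff gd eqd ii_ (bnd gd fc false ii_ x) h | _ => 0%Z end else 0%Z end)%Z).
    { intros ii Hii gg.
      rewrite (chain_coeff qd qf T_WF qeq ii).
      - rewrite bnd_cmap, coeff_cmap, (bnd_bnd gd fc HW) by auto.
        destruct ii as [|ii_]; [reflexivity|].
        destruct (ii_ <? p) eqn:Eip; [|reflexivity].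
        apply Nat.ltb_lt in Eip.
        destruct (bnd_spec gd fc HW false ii_ x Wx) as [Cx Dx'].
        rewrite xi_top by (auto; lia). reflexivity.
      - apply WF_cmap; exact Ay.
      - rewrite cdim_cmap, By. lia.
      - apply (f_spec n p x (xi_WF n) Wx); lia. }
    rewrite (bnd_Comp qd qf T_WF true i (S p) _ _ _ eq_refl)
      by (cbn [WFc cdim]; rewrite ?B, ?Dc, ?F; repeat split; auto; lia).
    destruct (S p <? i) eqn:Ei.
    + apply Nat.ltb_lt in Ei.
      rewrite (bnd_Comp qd qf T_WF true i p _ _ _ eq_refl) by (rewrite ?B, ?Dc; auto; lia).
      assert (p <? i = true) as -> by (apply Nat.ltb_lt; lia).
      cbn [coeff]. rewrite (bnd_ge qd qf true i (chain _ _ _)) by lia.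
      rewrite (coeff_gt qd qeq i (chain _ _ _)) by lia.
      rewrite IHx, IHy by (auto; lia).
      rewrite (bnd_Comp gd fc HW true i p _ _ _ eq_refl) by auto.
      assert (p <? i = true) as -> by (apply Nat.ltb_lt; lia).
      destruct i as [|i']; [lia|].
      rewrite (bnd_Comp gd fc HW false i' p _ _ _ eq_refl) by auto.
      assert (p <? i' = true) as -> by (apply Nat.ltb_lt; lia).
      destruct g'; cbn [coeff]; lia.
    + apply Nat.ltb_ge in Ei. cbv beta iota.
      destruct (p <? i) eqn:Ep.
      * apply Nat.ltb_lt in Ep. assert (i = S p) by lia. subst i.
        rewrite (bnd_Comp qd qf T_WF true (S p) p _ _ _ eq_refl) by (rewrite ?B, ?Dc; auto; lia).
        assert (p <? S p = true) as -> by (apply Nat.ltb_lt; lia).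
        cbn [coeff]. rewrite Hch by lia. rewrite IHx by (auto; lia).
        rewrite (bnd_Comp gd fc HW true (S p) p _ _ _ eq_refl) by auto.
        assert (p <? S p = true) as -> by (apply Nat.ltb_lt; lia).
        rewrite (bnd_Comp gd fc HW false p p _ _ _ eq_refl) by auto.
        rewrite Nat.ltb_irrefl. cbv beta iota.
        destruct g'; cbn [coeff]; lia.
      * apply Nat.ltb_ge in Ep.
        rewrite (bnd_Comp qd qf T_WF true i p _ _ _ eq_refl) by (rewrite ?B, ?Dc; auto; lia).
        assert (p <? i = false) as -> by (apply Nat.ltb_ge; lia). cbv beta iota.
        rewrite Hch by lia.
        rewrite (bnd_Comp gd fc HW true i p _ _ _ eq_refl) by auto.
        assert (p <? i = false) as -> by (apply Nat.ltb_ge; lia). cbv beta iota.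
        destruct i as [|i'].
        -- destruct g'; cbn; lia.
        -- rewrite (bnd_Comp gd fc HW false i' p _ _ _ eq_refl) by auto.
           assert (p <? i' = false) as -> by (apply Nat.ltb_ge; lia). cbv beta iota.
           assert (i' <? p = true) as -> by (apply Nat.ltb_lt; lia).
           destruct g'; cbn [coeff]; lia.
Qed.

End Lift.

Definition WFP (P : polygraph) := WFg (gdim P) (gface P).

Lemma T_atomic P : WFP P -> atomic P -> atomic (Tpoly P).
Proof.
  intros HW HA. unfold atomic, in_support, src_i, tgt_i. cbn [Tpoly gen gdim gface gen_eq_dec].
  intros x i Hi g [Hs Ht].
  destruct x as [|a|a]; cbn [Tdim] in Hi.
  - lia.
  - change (Gen (Eta a)) with (cmap (@Eta (gen P)) (Gen a)) in Hs, Ht.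
    rewrite bnd_cmap, coeff_cmap in Hs, Ht. destruct g as [|h|h]; try congruence.
    apply (HA a i Hi h). unfold in_support, src_i, tgt_i. auto.
  - change (Gen (Xi a)) with (xi_fuel (gdim P) (gface P) (S (gdim P a)) (Gen a)) in Hs, Ht.
    rewrite (xi_src _ _ _ HW (S (S (gdim P a)))) in Hs by (cbn; auto).
    rewrite (xi_tgt _ _ _ HW) in Ht by (cbn; auto).
    destruct i as [|i'].
    + destruct g; congruence.
    + destruct g as [|h|h]; try congruence. apply (HA a i' ltac:(lia) h). split; assumption.
Qed.

Lemma iter_ok m : WFP (Nat.iter m Tpoly empty_polygraph) /\ atomic (Nat.iter m Tpoly empty_polygraph).
Proof.
  induction m as [|m [IH1 IH2]].
  - split; [intros b g; destruct g | intros x; destruct x].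
  - change (Nat.iter (S m) Tpoly empty_polygraph) with (Tpoly (Nat.iter m Tpoly empty_polygraph)).
    split.
    + apply (T_WF _ _ IH1).
    + apply T_atomic; auto.
Qed.

Theorem mainTheorem12 : forall n : Z, (-1 <= n)%Z -> atomic (O_polygraph n).
Proof.
  intros n _. unfold O_polygraph. apply (proj2 (iter_ok _)).
Qed.
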